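(* Let $T$ be a rooted binary phylogenetic $X$-tree with $|X|\geq 3$ and strictly positive edge lengths, and let $X'\subset X$ be such that the ranking $\pi_T$ is strict and reversible with respect to $X'$ (with induced subtree $\widetilde{T}=T_{\widetilde X}$, $\widetilde{X}=X\setminus X'$). Then for every cherry $[x_i,x_j]$ of $T$ we have $|X'\cap\{x_i,x_j\}|\geq 1$, i.e. at least one leaf of every cherry is deleted.
   Context: A rooted binary phylogenetic $X$-tree ($X$ a finite nonempty set, $|X|=n$) is a rooted tree whose root $\rho$ has in-degree 0 and out-degree 2, all edges directed away from $\rho$, all other interior vertices have in-degree 1 and out-degree 2, and whose leaves are bijectively labelled by $X$ (for $|X|=1$ the tree may be a single vertex). Every edge $e$ has a strictly positive length $\lambda_e$. The Fair Proportion index of $x\in X$ is $FP_T(x)=\sum_{e\in P(T;\rho,x)}\lambda_e/D_e$, where $P(T;\rho,x)$ is the path from $\rho$ to $x$ and $D_e$ is the number of leaves descended from $e$. A cherry is a pair of leaves with the same parent. For $Y\subseteq X$, the induced subtree $T_Y$ is obtained from the minimal subtree of $T$ connecting $Y$ by suppressing all non-root vertices of in- and out-degree 1, adding the lengths of merged edges; if the root then has out-degree 1, it and its incident edge are deleted. The ranking $\pi_T$ orders $X$ by decreasing $FP_T$; it is strict if all values $FP_T(x)$, $x\in X$, are pairwise distinct. For $X'\subset X$, $\widetilde X=X\setminus X'$ and $\widetilde T=T_{\widetilde X}$, a strict ranking $\pi_T$ is reversible with respect to $X'$ if for all distinct $x_i,x_j\in\widetilde X$, $FP_T(x_i)>FP_T(x_j)$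 implies $FP_{\widetilde T}(x_i)<FP_{\widetilde T}(x_j)$. *)

(* Defs.v *)
From HB Require Import structures.
From mathcomp Require Import all_boot all_order all_algebra.
Set Implicit Arguments. Unset Strict Implicit. Unset Printing Implicit Defensive.
Import Order.TTheory GRing.Theory Num.Theory.
Local Open Scope ring_scope.

(* A rooted binary phylogenetic tree with leaf labels in nat and edge lengths
   in R.  [PLeaf x] is a single vertex labelled x; [PNode l a r b] is a vertex
   with out-degree 2 whose edge to the subtree [l] has length [a] and whose
   edge to the subtree [r] has length [b]. *)
Inductive ptree (R : Type) : Type :=
| PLeaf of nat
| PNode of ptree R & R & ptree R & R.

Arguments PLeaf {R} _.

Section PTree.
Variable R : realFieldType.

Fixpoint leaves (t : ptree R) : seq nat :=
  match t with
  | PLeaf x => [:: x]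
  | PNode l _ r _ => leaves l ++ leaves r
  end.

Definition well_labelled (t : ptree R) : bool := uniq (leaves t).

Fixpoint pos_lengths (t : ptree R) : bool :=
  match t with
  | PLeaf _ => true
  | PNode l a r b => [&& 0 < a, 0 < b, pos_lengths l & pos_lengths r]
  end.

(* Fair Proportion index: sum over the edges e on the root-to-x path of
   lambda_e / D_e, D_e = number of leaves below e. *)
Fixpoint FP (t : ptree R) (x : nat) : R :=
  match t with
  | PLeaf _ => 0
  | PNode l a r b =>
      if x \in leaves l then a / (size (leaves l))%:R + FP l x
      else if x \in leaves r then b / (size (leaves r))%:R + FP r x
      else 0
  end.

(* Restriction to the leaves satisfying Y: returns the restricted subtree
   together with the length that must be added to the edge entering it
   (coming from suppressed vertices of in- and out-degree 1). *)
Fixpoint restrict (Y : pred nat) (t : ptree R) : option (ptree R * R) :=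
  match t with
  | PLeaf x => if Y x then Some (PLeaf x, 0) else None
  | PNode l a r b =>
      match restrict Y l, restrict Y r with
      | Some (l', c), Some (r', d) => Some (PNode l' (a + c) r' (b + d), 0)
      | Some (l', c), None => Some (l', a + c)
      | None, Some (r', d) => Some (r', b + d)
      | None, None => None
      end
  end.

(* Induced subtree T_Y: at the root the pending length is discarded (a root of
   out-degree 1 is deleted together with its incident edge). [None] iff no
   leaf satisfies Y. *)
Definition induced (Y : pred nat) (t : ptree R) : option (ptree R) :=
  omap fst (restrict Y t).

Definition FPo (ot : option (ptree R)) (x : nat) : R :=
  if ot is Some t then FP t x else 0.

Definition is_leaf (t : ptree R) (x : nat) : bool :=
  if t is PLeaf y then y == x else false.

Fixpoint cherry (t : ptree R) (x y : nat) : bool :=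
  match t with
  | PLeaf _ => false
  | PNode l _ r _ =>
      ((is_leaf l x && is_leaf r y) || (is_leaf l y && is_leaf r x))
      || cherry l x y || cherry r x y
  end.

End PTree.

(* Main.v *)
Require Import Defs.
From mathcomp Require Import all_boot all_order all_algebra.
From mathcomp Require Import lra.
Import Order.TTheory GRing.Theory Num.Theory.
Local Open Scope ring_scope.

Set Implicit Arguments. Unset Strict Implicit.
Section Aux.
Variable R : realFieldType.

Lemma is_leafE (t : ptree R) x : is_leaf t x -> t = PLeaf x.
Proof. by case: t => //= y /eqP ->. Qed.

Lemma cherry_mem (t : ptree R) x y :
  cherry t x y -> (x \in leaves t) && (y \in leaves t).
Proof.
elim: t => //= l IHl a r IHr b.
case/orP=> [/orP[/orP[]|]|].
- by case/andP=> /is_leafE -> /is_leafE ->; rewrite !mem_cat !inE !eqxx orbT.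
- by case/andP=> /is_leafE -> /is_leafE ->; rewrite !mem_cat !inE !eqxx orbT.
- by move/IHl=> /andP[h1 h2]; rewrite !mem_cat h1 h2.
- by move/IHr=> /andP[h1 h2]; rewrite !mem_cat h1 h2 !orbT.
Qed.

Lemma restrict_sub (Y : pred nat) (t t' : ptree R) c :
  restrict Y t = Some (t', c) -> {subset leaves t' <= leaves t}.
Proof.
elim: t t' c => [x|l IHl a r IHr b] t' c /=.
  by case: (Y x) => // -[<- _].
case El: (restrict Y l) => [[l' c1]|]; case Er: (restrict Y r) => [[r' d]|] //.
- case=> <- _ z /=; rewrite !mem_cat => /orP[h|h].
    by rewrite (IHl _ _ El z h).
  by rewrite (IHr _ _ Er z h) orbT.
- by case=> <- _ z h; rewrite mem_cat (IHl _ _ El z h).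
- by case=> <- _ z h; rewrite mem_cat (IHr _ _ Er z h) orbT.
Qed.

Lemma key (Y : pred nat) (t : ptree R) x y :
  uniq (leaves t) -> cherry t x y -> Y x -> Y y ->
  exists t' c, [/\ restrict Y t = Some (t', c), x \in leaves t', y \in leaves t'
    & FP t' x - FP t' y = FP t x - FP t y].
Proof.
elim: t => //= l IHl a r IHr b.
rewrite cat_uniq => /and3P[ul dis ur] + Yx Yy.
case/orP=> [/orP[/orP[]|]|].
- case/andP=> /is_leafE El /is_leafE Er; rewrite El Er /= in dis *; rewrite Yx Yy.
  exists (PNode (PLeaf x) (a + 0) (PLeaf y) (b + 0)), 0; split => //=.
  + by rewrite inE eqxx.
  + by rewrite !inE eqxx orbT.
  + have hy : y != x.
      by move: dis; rewrite /= orbF inE.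
    by rewrite !inE eqxx (negbTE hy) eqxx !addr0.
- case/andP=> /is_leafE El /is_leafE Er; rewrite El Er /= in dis *; rewrite Yx Yy.
  exists (PNode (PLeaf y) (a + 0) (PLeaf x) (b + 0)), 0; split => //=.
  + by rewrite !inE eqxx orbT.
  + by rewrite inE eqxx.
  + have hx : x != y.
      by move: dis; rewrite /= orbF inE.
    by rewrite !inE eqxx (negbTE hx) eqxx !addr0.
- move=> ch; have /andP[xl yl] := cherry_mem ch.
  have [l' [c [El xl' yl' Hd]]] := IHl ul ch Yx Yy.
  rewrite El xl yl.
  case Er: (restrict Y r) => [[r' d]|].
  + exists (PNode l' (a + c) r' (b + d)), 0; split => //=.
    * by rewrite mem_cat xl'.
    * by rewrite mem_cat yl'.
    * rewrite xl' yl'; lra.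
  + by exists l', (a + c); split => //; lra.
- move=> ch; have /andP[xr yr] := cherry_mem ch.
  have [r' [d [Er xr' yr' Hd]]] := IHr ur ch Yx Yy.
  have nxl : x \notin leaves l.
    by apply/negP=> h; move/hasP: dis; apply; exists x.
  have nyl : y \notin leaves l.
    by apply/negP=> h; move/hasP: dis; apply; exists y.
  rewrite Er (negbTE nxl) (negbTE nyl) xr yr.
  case El: (restrict Y l) => [[l' c]|].
  + have sl := restrict_sub El.
    have nxl' : x \notin leaves l' by apply/negP=> /sl; rewrite (negbTE nxl).
    have nyl' : y \notin leaves l' by apply/negP=> /sl; rewrite (negbTE nyl).
    exists (PNode l' (a + c) r' (b + d)), 0; split => //=.
    * by rewrite mem_cat xr' orbT.
    * by rewrite mem_cat yr' orbT.
    * rewrite (negbTE nxl') (negbTE nyl') xr' yr'; lra.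
  + by exists r', (b + d); split => //; lra.
Qed.

Lemma cherry_neq (t : ptree R) x y : uniq (leaves t) -> cherry t x y -> x != y.
Proof.
elim: t => //= l IHl a r IHr b.
rewrite cat_uniq => /and3P[ul dis ur].
case/orP=> [/orP[/orP[]|]|].
- case/andP=> /is_leafE El /is_leafE Er; rewrite El Er /= in dis.
  by move: dis; rewrite /= orbF inE eq_sym.
- case/andP=> /is_leafE El /is_leafE Er; rewrite El Er /= in dis.
  by move: dis; rewrite /= orbF inE eq_sym.
- exact: IHl.
- exact: IHr.
Qed.
End Aux.

Theorem theorem1 (R : realFieldType) (T : ptree R) (X' : seq nat) :
  well_labelled T ->
  pos_lengths T ->
  (3 <= size (leaves T))%N ->
  (* X' is a proper subset of X *)
  {subset X' <= leaves T} ->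
  (exists x, (x \in leaves T) && (x \notin X')) ->
  (* the ranking pi_T is strict *)
  (forall xi xj, xi \in leaves T -> xj \in leaves T -> xi != xj ->
     FP T xi != FP T xj) ->
  (* pi_T is reversible w.r.t. X', with tilde T = T restricted to X \ X' *)
  (forall xi xj, xi \in leaves T -> xj \in leaves T ->
     xi \notin X' -> xj \notin X' -> xi != xj ->
     FP T xj < FP T xi ->
     FPo (induced [pred x | x \notin X'] T) xi <
     FPo (induced [pred x | x \notin X'] T) xj) ->
  forall xi xj, cherry T xi xj -> (xi \in X') || (xj \in X').
Proof.
move=> wl _ _ _ _ strict rev xi xj ch.
apply/negPn/negP; rewrite negb_or => /andP[nxi nxj].
have /andP[mi mj] := cherry_mem ch.
have ne := cherry_neq wl ch.
have [t' [c [E _ _ Hd]]] := key (Y := [pred x | x \notin X']) wl ch nxi nxj.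
have hind : induced [pred x | x \notin X'] T = Some t' by rewrite /induced E.
have := strict _ _ mi mj ne.
rewrite neq_lt => /orP[h|h].
- have ne' : xj != xi by rewrite eq_sym.
  have := rev _ _ mj mi nxj nxi ne' h.
  rewrite hind /= => h2.
  have : FP T xi - FP T xj < 0 by rewrite subr_lt0.
  rewrite -Hd subr_lt0 => h3; by move: (lt_trans h2 h3); rewrite ltxx.
- have := rev _ _ mi mj nxi nxj ne h.
  rewrite hind /= => h2.
  have : 0 < FP T xi - FP T xj by rewrite subr_gt0.
  rewrite -Hd subr_gt0 => h3; by move: (lt_trans h2 h3); rewrite ltxx.
Qed.
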